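(* Let $f:X\to Y$ be a continuous map between arbitrary topological spaces. Then $f$ is locally closed if and only if $f^{-1}:\mathcal P Y\to\mathcal P X$ is a D-morphism of MT-algebras.
   Context: For a space $X$, $\mathcal P X$ is the MT-algebra consisting of the powerset of $X$ with $\square$ the topological interior operator. An MT-morphism between MT-algebras is a complete boolean homomorphism $h$ with $h(\square a)\le\square h(a)$ for all $a$; such $h:M\to N$ has a left adjoint $h^*:N\to M$, $h^*(b)=\bigwedge\{a\in M: b\le h(a)\}$. An element $a$ of an MT-algebra is locally closed if $a=\square b\wedge\Diamond c$ for some $b,c$, where $\Diamond=\neg\square\neg$. An MT-morphism $h$ is a D-morphism if $h^*$ maps locally closed atoms to locally closed atoms. A point $x\in X$ is locally closed if $\{x\}$ is closed in some open neighborhood of $x$; a continuous map is locally closed if it maps locally closed points to locally closed points. *)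

(* Defs.v *)
From mathcomp Require Import all_boot all_order.
From mathcomp Require Import all_classical topology.
Set Implicit Arguments. Unset Strict Implicit. Unset Printing Implicit Defensive.
Local Open Scope classical_set_scope.

(* The MT-algebra P X of a space X: powerset of X, box = interior,
   diamond = ~ box ~. *)
Definition mt_box (X : topologicalType) (a : set X) : set X := interior a.
Definition mt_dia (X : topologicalType) (a : set X) : set X :=
  ~` interior (~` a).

Definition is_atom (X : Type) (a : set X) : Prop :=
  a <> set0 /\ forall b, b `<=` a -> b = set0 \/ b = a.

Definition lc_elem (X : topologicalType) (a : set X) : Prop :=
  exists b c : set X, a = mt_box b `&` mt_dia c.

Definition MT_morphism (X Y : topologicalType) (h : set Y -> set X) : Prop :=
  [/\ forall a, h (~` a) = ~` h a,
      forall S : set (set Y), h (\bigcup_(a in S) a) = \bigcup_(b in h @` S) b,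
      forall S : set (set Y), h (\bigcap_(a in S) a) = \bigcap_(b in h @` S) b
    & forall a, h (mt_box a) `<=` mt_box (h a)].

Definition left_adj (X Y : Type) (h : set Y -> set X) (b : set X) : set Y :=
  \bigcap_(a in [set a | b `<=` h a]) a.

Definition D_morphism (X Y : topologicalType) (h : set Y -> set X) : Prop :=
  MT_morphism h /\
  forall b : set X, is_atom b -> lc_elem b ->
    is_atom (left_adj h b) /\ lc_elem (left_adj h b).

(* x is locally closed: {x} is closed in some open neighbourhood U of x,
   i.e. (subspace topology) {x} = C `&` U for some closed C. *)
Definition lc_point (X : topologicalType) (x : X) : Prop :=
  exists U : set X, [/\ open U, U x &
    exists C : set X, closed C /\ C `&` U = [set x]].

Definition lc_map (X Y : topologicalType) (f : X -> Y) : Prop :=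
  forall x, lc_point x -> lc_point (f x).

(* Main.v *)
Require Import Defs.
From mathcomp Require Import all_boot all_order.
From mathcomp Require Import all_classical topology.
Local Open Scope classical_set_scope.

Lemma atomE (X : Type) (a : set X) : is_atom a <-> exists x, a = [set x].
Proof.
split.
- move=> [a0 H]. have [x ax] : exists x, a x.
    apply: contra_notP a0 => nx; apply/seteqP; split => // y ay; apply: nx; by exists y.
  exists x. have : [set x] `<=` a by move=> y ->.
  move/H => [] h //. exfalso; have : [set x] x by []. by rewrite h.
- move=> [x ->]; split.
    move=> h; have : [set x] x by []. by rewrite h.
  move=> b bx. have [bxx|nbx] := pselect (b x).
    right; apply/seteqP; split => // y ->; exact bxx.
  left; apply/seteqP; split => y hb //. by move: (hb); rewrite (bx _ hb).
Qed.

Lemma lcE (X : topologicalType) (x : X) : lc_elem [set x] <-> lc_point x.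
Proof.
split.
- move=> [b [c E]]. exists (mt_box b); split.
  + exact: open_interior.
  + by have : [set x] x by []; rewrite E => -[].
  + exists (mt_dia c); split; last by rewrite setIC.
    rewrite /mt_dia; apply: open_closedC; exact: open_interior.
- move=> [U [oU Ux [C [cC E]]]]. exists U, C.
  rewrite /mt_box /mt_dia.
  have -> : interior U = U by apply/interior_id.
  rewrite interiorC setCK -(closure_id C).1 //. by rewrite setIC.
Qed.

Lemma ladjE (X Y : Type) (f : X -> Y) (x : X) :
  left_adj (fun B : set Y => f @^-1` B) [set x] = [set f x].
Proof.
apply/seteqP; split.
- move=> y H. apply: (H [set f x]) => z ->. by [].
- move=> y -> a /= Ha. exact: (Ha x).
Qed.

Theorem lemma5p12 (X Y : topologicalType) (f : X -> Y) :
  continuous f ->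
  (lc_map f <-> D_morphism (fun B : set Y => f @^-1` B)).
Proof.
move=> cf.
have MT : MT_morphism (fun B : set Y => f @^-1` B).
  split.
  - move=> a; by rewrite preimage_setC.
  - move=> S; apply/seteqP; split.
    + move=> x [a Sa ax]; exists (f @^-1` a) => //; by exists a.
    + move=> x [b [a Sa <-] bx]; by exists a.
  - move=> S; apply/seteqP; split.
    + move=> x H b [a Sa <-]; exact: H.
    + move=> x H a Sa; apply: (H (f @^-1` a)); by exists a.
  - move=> a x /= ax. rewrite /mt_box /interior /=.
    exact: (cf x).
split.
- move=> lcf; split => // b /atomE [x ->] /lcE lx.
  rewrite ladjE; split; first by apply/atomE; exists (f x).
  apply/lcE; exact: lcf.
- move=> [_ D] x lx.
  have := D [set x] (proj2 (@atomE _ [set x]) (ex_intro _ x erefl)) (proj2 (@lcE _ x) lx).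
  rewrite ladjE => -[_]. by move/lcE.
Qed.
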